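(* Let $\mathcal{V}$ and $\mathcal{W}$ be quaternionic two-sided Banach algebras with unit $1\neq 0$, let $\mathcal{A}:\mathcal{V}\to\mathcal{W}$ be a bounded below homomorphism, and let $a\in\mathcal{V}$. Then $\partial\sigma_{S}(a)\subset\partial\sigma_{S,\mathcal{A}}^{\Phi}(a)$, where $\partial$ denotes the boundary in $\mathbb{H}$.
   Context: $\mathbb{H}$ denotes the quaternions, $Re(q)$ the real part and $|q|$ the norm of $q$. A quaternionic two-sided Banach algebra with unit is a two-sided $\mathbb{H}$-vector space $\mathcal{V}$ with an associative product satisfying $x(y+z)=xy+xz$, $(x+y)z=xz+yz$, $q(xy)=(qx)y$, $(xy)q=x(yq)$, complete for a norm with $\|qx\|=|q|\|x\|=\|xq\|$, $\|xy\|\le\|x\|\|y\|$, with unit $1_{\mathcal{V}}$, $\|1_{\mathcal{V}}\|=1$. A homomorphism $\mathcal{A}$ is additive, multiplicative, $\mathbb{H}$-linear on both sides and unital; it is bounded below if there is $c>0$ with $\|\mathcal{A}(v)\|\ge c\|v\|$ for all $v$. $\mathcal{V}^{-1}$ denotes invertible elements. $R_q(v)=v^2-2Re(q)v+|q|^21_{\mathcal{V}}$. The S-spectrum is $\sigma_S(v)=\{q\in\mathbb{H}:R_q(v)\notin\mathcal{V}^{-1}\}$. $\Phi_{\mathcal{A}}=\{v:\mathcal{A}(v)\in\mathcal{W}^{-1}\}$ and $\sigma_{S,\mathcal{A}}^{\Phi}(v)=\{q\in\mathbb{H}:R_q(v)\notin\Phi_{\mathcal{A}}\}$. *)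

(* Defs.v *)
From Stdlib Require Import Reals.
Open Scope R_scope.

Record quat := Quat { qre : R; qi : R; qj : R; qk : R }.

Definition qadd (p q : quat) : quat :=
  Quat (qre p + qre q) (qi p + qi q) (qj p + qj q) (qk p + qk q).
Definition qopp (p : quat) : quat := Quat (- qre p) (- qi p) (- qj p) (- qk p).
Definition qsub (p q : quat) : quat := qadd p (qopp q).
Definition qmul (p q : quat) : quat :=
  Quat (qre p * qre q - qi p * qi q - qj p * qj q - qk p * qk q)
       (qre p * qi q + qi p * qre q + qj p * qk q - qk p * qj q)
       (qre p * qj q - qi p * qk q + qj p * qre q + qk p * qi q)
       (qre p * qk q + qi p * qj q - qj p * qi q + qk p * qre q).
Definition qzero : quat := Quat 0 0 0 0.
Definition qone : quat := Quat 1 0 0 0.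
Definition qreal (r : R) : quat := Quat r 0 0 0.
Definition Re (q : quat) : R := qre q.
Definition qnorm (q : quat) : R :=
  sqrt (qre q * qre q + qi q * qi q + qj q * qj q + qk q * qk q).

Definition interiorH (S : quat -> Prop) (q : quat) : Prop :=
  exists e, 0 < e /\ forall p, qnorm (qsub p q) < e -> S p.
Definition closureH (S : quat -> Prop) (q : quat) : Prop :=
  forall e, 0 < e -> exists p, S p /\ qnorm (qsub p q) < e.
Definition boundaryH (S : quat -> Prop) (q : quat) : Prop :=
  closureH S q /\ ~ interiorH S q.

Record QBanachAlg := {
  car :> Type;
  vadd : car -> car -> car;
  vzero : car;
  vopp : car -> car;
  vmul : car -> car -> car;
  vone : car;
  lsc : quat -> car -> car;
  rsc : car -> quat -> car;
  vnorm : car -> R;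
  vaddA : forall x y z, vadd x (vadd y z) = vadd (vadd x y) z;
  vaddC : forall x y, vadd x y = vadd y x;
  vadd0 : forall x, vadd x vzero = x;
  vaddN : forall x, vadd x (vopp x) = vzero;
  lscDr : forall q x y, lsc q (vadd x y) = vadd (lsc q x) (lsc q y);
  lscDl : forall p q x, lsc (qadd p q) x = vadd (lsc p x) (lsc q x);
  lscA : forall p q x, lsc (qmul p q) x = lsc p (lsc q x);
  lsc1 : forall x, lsc qone x = x;
  rscDl : forall q x y, rsc (vadd x y) q = vadd (rsc x q) (rsc y q);
  rscDr : forall p q x, rsc x (qadd p q) = vadd (rsc x p) (rsc x q);
  rscA : forall p q x, rsc x (qmul p q) = rsc (rsc x p) q;
  rsc1 : forall x, rsc x qone = x;
  lrscA : forall p q x, rsc (lsc p x) q = lsc p (rsc x q);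
  lrsc_real : forall (r : R) x, lsc (qreal r) x = rsc x (qreal r);
  vmulA : forall x y z, vmul x (vmul y z) = vmul (vmul x y) z;
  vmulDr : forall x y z, vmul x (vadd y z) = vadd (vmul x y) (vmul x z);
  vmulDl : forall x y z, vmul (vadd x y) z = vadd (vmul x z) (vmul y z);
  lsc_mul : forall q x y, lsc q (vmul x y) = vmul (lsc q x) y;
  rsc_mul : forall q x y, rsc (vmul x y) q = vmul x (rsc y q);
  vmul1l : forall x, vmul vone x = x;
  vmul1r : forall x, vmul x vone = x;
  vnorm_ge0 : forall x, 0 <= vnorm x;
  vnorm_eq0 : forall x, vnorm x = 0 -> x = vzero;
  vnorm0 : vnorm vzero = 0;
  vnorm_triangle : forall x y, vnorm (vadd x y) <= vnorm x + vnorm y;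
  vnorm_lsc : forall q x, vnorm (lsc q x) = qnorm q * vnorm x;
  vnorm_rsc : forall q x, vnorm (rsc x q) = qnorm q * vnorm x;
  vnorm_mul : forall x y, vnorm (vmul x y) <= vnorm x * vnorm y;
  vnorm1 : vnorm vone = 1;
  vcomplete : forall u : nat -> car,
    (forall e, 0 < e -> exists N, forall m n, (N <= m)%nat -> (N <= n)%nat ->
        vnorm (vadd (u m) (vopp (u n))) < e) ->
    exists l, forall e, 0 < e -> exists N, forall n, (N <= n)%nat ->
        vnorm (vadd (u n) (vopp l)) < e
}.

Arguments vadd {_}. Arguments vzero {_}. Arguments vopp {_}.
Arguments vmul {_}. Arguments vone {_}. Arguments lsc {_}.
Arguments rsc {_}. Arguments vnorm {_}.

Definition invertible {V : QBanachAlg} (x : V) : Prop :=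
  exists y : V, vmul x y = vone /\ vmul y x = vone.

Definition Rq {V : QBanachAlg} (q : quat) (v : V) : V :=
  vadd (vadd (vmul v v) (vopp (lsc (qreal (2 * Re q)) v)))
       (lsc (qreal (qnorm q ^ 2)) vone).

Definition S_spectrum {V : QBanachAlg} (v : V) (q : quat) : Prop :=
  ~ invertible (Rq q v).

Definition is_homomorphism {V W : QBanachAlg} (A : V -> W) : Prop :=
  (forall x y, A (vadd x y) = vadd (A x) (A y)) /\
  (forall x y, A (vmul x y) = vmul (A x) (A y)) /\
  (forall q x, A (lsc q x) = lsc q (A x)) /\
  (forall q x, A (rsc x q) = rsc (A x) q) /\
  A vone = vone.

Definition bounded_below {V W : QBanachAlg} (A : V -> W) : Prop :=
  exists c, 0 < c /\ forall v, vnorm (A v) >= c * vnorm v.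

Definition PhiA {V W : QBanachAlg} (A : V -> W) (v : V) : Prop :=
  invertible (A v).

Definition S_spectrum_Phi {V W : QBanachAlg} (A : V -> W) (v : V) (q : quat) : Prop :=
  ~ PhiA A (Rq q v).

(* Main.v *)
Require Import Defs.
From Stdlib Require Import Reals Lra Lia Psatz Classical.
Open Scope R_scope.
Arguments vaddA {_}.
Arguments vaddC {_}.
Arguments vadd0 {_}.
Arguments vaddN {_}.
Arguments lscDr {_}.
Arguments lscDl {_}.
Arguments lscA {_}.
Arguments lsc1 {_}.
Arguments rscDl {_}.
Arguments rscDr {_}.
Arguments rscA {_}.
Arguments rsc1 {_}.
Arguments lrscA {_}.
Arguments lrsc_real {_}.
Arguments vmulA {_}.
Arguments vmulDr {_}.
Arguments vmulDl {_}.
Arguments lsc_mul {_}.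
Arguments rsc_mul {_}.
Arguments vmul1l {_}.
Arguments vmul1r {_}.
Arguments vnorm_ge0 {_}.
Arguments vnorm_eq0 {_}.
Arguments vnorm0 {_}.
Arguments vnorm_triangle {_}.
Arguments vnorm_lsc {_}.
Arguments vnorm_rsc {_}.
Arguments vnorm_mul {_}.
Arguments vnorm1 {_}.

Section Alg.
Context {V : QBanachAlg}.
Implicit Types x y z : V.

Lemma vadd0l x : vadd vzero x = x.
Proof. rewrite vaddC; apply vadd0. Qed.
Lemma vaddNl x : vadd (vopp x) x = vzero.
Proof. rewrite vaddC; apply vaddN. Qed.
Lemma vadd_cancel_l x y z : vadd x y = vadd x z -> y = z.
Proof.
  intro H. rewrite <- (vadd0l y), <- (vadd0l z), <- (vaddNl x), <- !vaddA, H. reflexivity.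
Qed.
Lemma videm0 x : vadd x x = x -> x = vzero.
Proof. intro H. apply (vadd_cancel_l x). rewrite vadd0. exact H. Qed.
Lemma vopp_unique x y : vadd x y = vzero -> y = vopp x.
Proof. intro H. apply (vadd_cancel_l x). rewrite vaddN. exact H. Qed.
Lemma vopp_opp x : vopp (vopp x) = x.
Proof. symmetry. apply vopp_unique. apply vaddNl. Qed.
Lemma vswap4 (a b c d : V) : vadd (vadd a b) (vadd c d) = vadd (vadd a c) (vadd b d).
Proof.
  rewrite <- !vaddA. f_equal. rewrite !vaddA. f_equal. apply vaddC.
Qed.
Lemma vopp_add x y : vopp (vadd x y) = vadd (vopp x) (vopp y).
Proof. symmetry. apply vopp_unique. rewrite vswap4, !vaddN. apply vadd0. Qed.
Lemma vopp0 : vopp (@vzero V) = vzero.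
Proof. symmetry; apply vopp_unique; apply vadd0. Qed.
Lemma vmul0r x : vmul x vzero = vzero.
Proof. apply videm0. rewrite <- vmulDr, vadd0. reflexivity. Qed.
Lemma vmul0l x : vmul vzero x = vzero.
Proof. apply videm0. rewrite <- vmulDl, vadd0. reflexivity. Qed.
Lemma vmulNr x y : vmul x (vopp y) = vopp (vmul x y).
Proof. apply vopp_unique. rewrite <- vmulDr, vaddN. apply vmul0r. Qed.
Lemma vmulNl x y : vmul (vopp x) y = vopp (vmul x y).
Proof. apply vopp_unique. rewrite <- vmulDl, vaddN. apply vmul0l. Qed.

Lemma qadd_real r s : qadd (qreal r) (qreal s) = qreal (r + s).
Proof. unfold qadd, qreal; simpl. rewrite Rplus_0_r. reflexivity. Qed.
Lemma lsc_realD r s x : vadd (lsc (qreal r) x) (lsc (qreal s) x) = lsc (qreal (r + s)) x.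
Proof. rewrite <- lscDl, qadd_real. reflexivity. Qed.
Lemma lsc_real0 x : lsc (qreal 0) x = vzero.
Proof. apply videm0. rewrite lsc_realD, Rplus_0_r. reflexivity. Qed.
Lemma vopp_lsc r x : vopp (lsc (qreal r) x) = lsc (qreal (- r)) x.
Proof. symmetry. apply vopp_unique. rewrite lsc_realD, Rplus_opp_r. apply lsc_real0. Qed.
Lemma qnorm_real r : qnorm (qreal r) = Rabs r.
Proof.
  unfold qnorm, qreal; simpl.
  replace (r * r + 0 * 0 + 0 * 0 + 0 * 0) with (Rsqr r) by (unfold Rsqr; ring).
  apply sqrt_Rsqr_abs.
Qed.
Lemma vnorm_lsc_real r x : vnorm (lsc (qreal r) x) = Rabs r * vnorm x.
Proof. rewrite vnorm_lsc, qnorm_real. reflexivity. Qed.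
Lemma vnorm_opp x : vnorm (vopp x) = vnorm x.
Proof.
  rewrite <- (lsc1 x). change qone with (qreal 1).
  rewrite vopp_lsc, !vnorm_lsc_real, Rabs_Ropp, Rabs_R1. reflexivity.
Qed.
Lemma vnorm_sub_sym x y : vnorm (vadd x (vopp y)) = vnorm (vadd y (vopp x)).
Proof. rewrite <- vnorm_opp, vopp_add, vopp_opp, vaddC. reflexivity. Qed.
Lemma vsub0_eq x y : vadd x (vopp y) = vzero -> x = y.
Proof. intro H. rewrite <- (vopp_opp y). apply vopp_unique. rewrite vaddC. exact H. Qed.

Lemma small0 t : 0 <= t -> (forall e, 0 < e -> t < e) -> t = 0.
Proof.
  intros H0 H. destruct (Rle_lt_or_eq_dec 0 t H0) as [Hp|Hp]; auto.
  specialize (H t Hp). lra.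
Qed.

Fixpoint vpow x n : V := match n with O => vone | S m => vmul x (vpow x m) end.
Fixpoint psum x n : V := match n with O => vzero | S m => vadd (psum x m) (vpow x m) end.

Lemma vpow_norm x n : vnorm (vpow x n) <= vnorm x ^ n.
Proof.
  induction n; simpl. rewrite vnorm1; lra.
  eapply Rle_trans. apply vnorm_mul. apply Rmult_le_compat_l. apply vnorm_ge0. exact IHn.
Qed.
Lemma vpow_Sr x n : vpow x (S n) = vmul (vpow x n) x.
Proof.
  induction n. simpl. rewrite vmul1r, vmul1l. reflexivity.
  change (vpow x (S (S n))) with (vmul x (vpow x (S n))). rewrite IHn.
  rewrite vmulA. f_equal. rewrite <- IHn. reflexivity.
Qed.

Lemma psum_diff x n k : vnorm x < 1 ->
  vnorm (vadd (psum x (n + k)) (vopp (psum x n))) <= vnorm x ^ n * (1 - vnorm x ^ k) / (1 - vnorm x).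
Proof.
  intro Hr. assert (H0 := vnorm_ge0 x). induction k.
  - rewrite Nat.add_0_r, vaddN, vnorm0. simpl. unfold Rdiv.
    replace (1 - 1) with 0 by ring. rewrite Rmult_0_r, Rmult_0_l. lra.
  - replace (n + S k)%nat with (S (n + k)) by lia. simpl psum.
    replace (vadd (vadd (psum x (n + k)) (vpow x (n + k))) (vopp (psum x n)))
      with (vadd (vadd (psum x (n + k)) (vopp (psum x n))) (vpow x (n + k))).
    2:{ rewrite <- !vaddA. f_equal. apply vaddC. }
    eapply Rle_trans. apply vnorm_triangle.
    eapply Rle_trans. apply Rplus_le_compat. exact IHk. apply vpow_norm.
    rewrite pow_add. simpl. right. field. lra.
Qed.

Lemma psum_diff2 x n m : vnorm x < 1 -> (n <= m)%nat ->
  vnorm (vadd (psum x m) (vopp (psum x n))) <= vnorm x ^ n / (1 - vnorm x).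
Proof.
  intros Hr Hnm. replace m with (n + (m - n))%nat by lia.
  eapply Rle_trans. apply psum_diff; auto.
  assert (H0 := vnorm_ge0 x).
  assert (0 <= vnorm x ^ (m - n)) by (apply pow_le; auto).
  assert (0 <= vnorm x ^ n) by (apply pow_le; auto).
  unfold Rdiv. apply Rmult_le_compat_r. left; apply Rinv_0_lt_compat; lra.
  nra.
Qed.

Lemma psum_left x n : vmul (vadd vone (vopp x)) (psum x n) = vadd vone (vopp (vpow x n)).
Proof.
  induction n; simpl.
  - rewrite vmul0r, vaddN. reflexivity.
  - rewrite vmulDr, IHn, vmulDl, vmul1l, vmulNl.
    rewrite <- vaddA. f_equal. rewrite vaddA, vaddNl, vadd0l. reflexivity.
Qed.
Lemma psum_right x n : vmul (psum x n) (vadd vone (vopp x)) = vadd vone (vopp (vpow x n)).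
Proof.
  induction n.
  - simpl. rewrite vmul0l, vaddN. reflexivity.
  - simpl psum. rewrite vmulDl, IHn, vmulDr, vmul1r, vmulNr, <- vpow_Sr.
    rewrite <- vaddA. f_equal. rewrite vaddA, vaddNl, vadd0l. reflexivity.
Qed.

Lemma neumann1 x : vnorm x < 1 -> invertible (vadd vone (vopp x)).
Proof.
  intro Hr. set (r := vnorm x) in *. assert (H0 : 0 <= r) by apply vnorm_ge0.
  assert (Hr' : Rabs r < 1).
  { rewrite Rabs_right; lra. }
  destruct (vcomplete V (psum x)) as [l Hl].
  { intros e He. destruct (pow_lt_1_zero r Hr' (e * (1 - r))) as [N HN].
    { apply Rmult_lt_0_compat; lra. }
    exists N. intros m n Hm Hn.
    assert (forall a b, (N <= a)%nat -> (a <= b)%nat ->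
               vnorm (vadd (psum x b) (vopp (psum x a))) < e).
    { intros a b Ha Hab. eapply Rle_lt_trans. apply psum_diff2; auto.
      specialize (HN a Ha). rewrite Rabs_right in HN.
      2:{ apply Rle_ge, pow_le; auto. }
      fold r. apply (Rmult_lt_reg_r (1 - r)). lra. unfold Rdiv.
      rewrite Rmult_assoc, Rinv_l, Rmult_1_r; lra. }
    destruct (Nat.le_ge_cases n m).
    - apply H; auto.
    - rewrite vnorm_sub_sym. apply H; auto. }
  set (z := vadd vone (vopp x)).
  assert (Hz : vnorm z <= 1 + r).
  { eapply Rle_trans. apply vnorm_triangle. rewrite vnorm1, vnorm_opp. fold r. lra. }
  assert (Hz0 : 0 <= vnorm z) by apply vnorm_ge0.
  assert (Hkey : forall e, 0 < e -> exists n, vnorm (vadd l (vopp (psum x n))) < e / (2 * (1 + r)) /\ r ^ n < e / 2).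
  { intros e He.
    destruct (Hl (e / (2 * (1 + r)))) as [N1 HN1].
    { apply Rdiv_lt_0_compat; lra. }
    destruct (pow_lt_1_zero r Hr' (e / 2)) as [N2 HN2]. lra.
    exists (N1 + N2)%nat. split.
    - rewrite vnorm_sub_sym. apply HN1. lia.
    - assert (HH := HN2 (N1 + N2)%nat ltac:(lia)).
      rewrite Rabs_right in HH. exact HH. apply Rle_ge, pow_le; auto. }
  exists l. split.
  - apply vsub0_eq. apply vnorm_eq0. apply small0. apply vnorm_ge0.
    intros e He. destruct (Hkey e He) as [n [H1 H2]].
    replace (vadd (vmul z l) (vopp vone))
      with (vadd (vmul z (vadd l (vopp (psum x n)))) (vopp (vpow x n))).
    2:{ rewrite vmulDr, vmulNr. unfold z at 2. rewrite psum_left.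
        rewrite vopp_add, vopp_opp. rewrite <- vaddA. f_equal.
        rewrite <- vaddA, vaddN, vadd0. reflexivity. }
    eapply Rle_lt_trans. apply vnorm_triangle. rewrite vnorm_opp.
    assert (vnorm (vpow x n) <= r ^ n) by apply vpow_norm.
    assert (vnorm (vmul z (vadd l (vopp (psum x n)))) <= (1 + r) * (e / (2 * (1 + r)))).
    { eapply Rle_trans. apply vnorm_mul. apply Rmult_le_compat; auto. apply vnorm_ge0. lra. }
    replace ((1 + r) * (e / (2 * (1 + r)))) with (e / 2) in H3 by (field; lra).
    lra.
  - apply vsub0_eq. apply vnorm_eq0. apply small0. apply vnorm_ge0.
    intros e He. destruct (Hkey e He) as [n [H1 H2]].
    replace (vadd (vmul l z) (vopp vone))
      with (vadd (vmul (vadd l (vopp (psum x n))) z) (vopp (vpow x n))).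
    2:{ rewrite vmulDl, vmulNl. unfold z at 2. rewrite psum_right.
        rewrite vopp_add, vopp_opp. rewrite <- vaddA. f_equal.
        rewrite <- vaddA, vaddN, vadd0. reflexivity. }
    eapply Rle_lt_trans. apply vnorm_triangle. rewrite vnorm_opp.
    assert (vnorm (vpow x n) <= r ^ n) by apply vpow_norm.
    assert (vnorm (vmul (vadd l (vopp (psum x n))) z) <= (e / (2 * (1 + r))) * (1 + r)).
    { eapply Rle_trans. apply vnorm_mul. apply Rmult_le_compat; auto. apply vnorm_ge0. lra. }
    replace ((e / (2 * (1 + r))) * (1 + r)) with (e / 2) in H3 by (field; lra).
    lra.
Qed.

Lemma neumann (u : V) : vnorm u < 1 -> invertible (vadd vone u).
Proof. intro H. rewrite <- (vopp_opp u). apply neumann1. rewrite vnorm_opp. exact H. Qed.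


Lemma Rq_diff (b : V) p q : vadd (Rq p b) (vopp (Rq q b)) =
  vadd (lsc (qreal (- (2 * Re p) + 2 * Re q)) b) (lsc (qreal (qnorm p ^ 2 + - qnorm q ^ 2)) vone).
Proof.
  unfold Rq. rewrite !vopp_add, !vopp_opp.
  rewrite vswap4. rewrite (vswap4 (vmul b b)). rewrite vaddN, vadd0l.
  rewrite !vopp_lsc, !lsc_realD. reflexivity.
Qed.

Lemma abs_le_sq d n : 0 <= n -> d * d <= n * n -> Rabs d <= n.
Proof. intros H0 H. destruct (Rcase_abs d); [rewrite Rabs_left | rewrite Rabs_right]; nra. Qed.

Ltac sq4 := match goal with |- context [?a * ?a + ?b * ?b + ?c * ?c + ?d * ?d] =>
  pose proof (Rle_0_sqr a); pose proof (Rle_0_sqr b); pose proof (Rle_0_sqr c); pose proof (Rle_0_sqr d);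
  unfold Rsqr in *; lra end.

Lemma real_bound B e p0 p1 p2 p3 q0 q1 q2 q3 m : 0 < e -> 0 <= B -> 0 <= m ->
  m * m = (p0 - q0) * (p0 - q0) + (p1 - q1) * (p1 - q1) + (p2 - q2) * (p2 - q2) + (p3 - q3) * (p3 - q3) ->
  m < Rmin 1 (e / (2 * B + 2 * (Rabs q0 + Rabs q1 + Rabs q2 + Rabs q3) + 2)) ->
  Rabs (- (2 * p0) + 2 * q0) * B +
  Rabs ((p0 * p0 + p1 * p1 + p2 * p2 + p3 * p3) + - (q0 * q0 + q1 * q1 + q2 * q2 + q3 * q3)) * 1 < e.
Proof.
  intros He HB Hm0 Hn2 Hp.
  pose proof (Rabs_pos q0). pose proof (Rabs_pos q1). pose proof (Rabs_pos q2). pose proof (Rabs_pos q3).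
  assert (HC : 0 < 2 * B + 2 * (Rabs q0 + Rabs q1 + Rabs q2 + Rabs q3) + 2) by lra.
  assert (Hd1 := Rmin_l 1 (e / (2 * B + 2 * (Rabs q0 + Rabs q1 + Rabs q2 + Rabs q3) + 2))).
  assert (Hd2 := Rmin_r 1 (e / (2 * B + 2 * (Rabs q0 + Rabs q1 + Rabs q2 + Rabs q3) + 2))).
  assert (E0 : Rabs (p0 - q0) <= m) by (apply abs_le_sq; auto; rewrite Hn2; sq4).
  assert (E1 : Rabs (p1 - q1) <= m) by (apply abs_le_sq; auto; rewrite Hn2; sq4).
  assert (E2 : Rabs (p2 - q2) <= m) by (apply abs_le_sq; auto; rewrite Hn2; sq4).
  assert (E3 : Rabs (p3 - q3) <= m) by (apply abs_le_sq; auto; rewrite Hn2; sq4).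
  replace (- (2 * p0) + 2 * q0) with (-2 * (p0 - q0)) by ring.
  replace ((p0 * p0 + p1 * p1 + p2 * p2 + p3 * p3) + - (q0 * q0 + q1 * q1 + q2 * q2 + q3 * q3))
    with (2 * (q0 * (p0 - q0) + q1 * (p1 - q1) + q2 * (p2 - q2) + q3 * (p3 - q3)) + m * m)
    by (rewrite Hn2; ring).
  assert (T1 : Rabs (-2 * (p0 - q0)) <= 2 * m).
  { rewrite Rabs_mult. replace (Rabs (-2)) with 2. lra.
    rewrite Rabs_left by lra. ring. }
  assert (T2 : Rabs (2 * (q0 * (p0 - q0) + q1 * (p1 - q1) + q2 * (p2 - q2) + q3 * (p3 - q3)) + m * m)
     <= 2 * (m * (Rabs q0 + Rabs q1 + Rabs q2 + Rabs q3)) + m * m).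
  { eapply Rle_trans. apply Rabs_triang. rewrite (Rabs_right (m * m)) by nra.
    apply Rplus_le_compat_r. rewrite Rabs_mult, (Rabs_right 2) by lra.
    apply Rmult_le_compat_l. lra.
    pose proof (Rabs_triang (q0 * (p0 - q0) + q1 * (p1 - q1) + q2 * (p2 - q2)) (q3 * (p3 - q3))).
    pose proof (Rabs_triang (q0 * (p0 - q0) + q1 * (p1 - q1)) (q2 * (p2 - q2))).
    pose proof (Rabs_triang (q0 * (p0 - q0)) (q1 * (p1 - q1))).
    rewrite !Rabs_mult in *.
    pose proof (Rmult_le_compat_l (Rabs q0) _ _ ltac:(auto) E0).
    pose proof (Rmult_le_compat_l (Rabs q1) _ _ ltac:(auto) E1).
    pose proof (Rmult_le_compat_l (Rabs q2) _ _ ltac:(auto) E2).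
    pose proof (Rmult_le_compat_l (Rabs q3) _ _ ltac:(auto) E3).
    lra. }
  assert (Hm1 : m * m <= m) by nra.
  assert (Hme : m * (2 * B + 2 * (Rabs q0 + Rabs q1 + Rabs q2 + Rabs q3) + 2) < e).
  { apply Rlt_le_trans with (e / (2 * B + 2 * (Rabs q0 + Rabs q1 + Rabs q2 + Rabs q3) + 2)
          * (2 * B + 2 * (Rabs q0 + Rabs q1 + Rabs q2 + Rabs q3) + 2)).
    - apply Rmult_lt_compat_r. lra. lra.
    - right. field. lra. }
  nra.
Qed.

Lemma qnorm_sq p : qnorm p ^ 2 = qre p * qre p + qi p * qi p + qj p * qj p + qk p * qk p.
Proof. unfold qnorm. apply pow2_sqrt. nra. Qed.

Lemma Rq_cont (b : V) q e : 0 < e -> exists d, 0 < d /\ forall p,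
  qnorm (qsub p q) < d -> vnorm (vadd (Rq p b) (vopp (Rq q b))) < e.
Proof.
  intro He.
  exists (Rmin 1 (e / (2 * vnorm b + 2 * (Rabs (qre q) + Rabs (qi q) + Rabs (qj q) + Rabs (qk q)) + 2))).
  split.
  { pose proof (Rabs_pos (qre q)). pose proof (Rabs_pos (qi q)). pose proof (Rabs_pos (qj q)).
    pose proof (Rabs_pos (qk q)). pose proof (vnorm_ge0 b).
    apply Rmin_pos. lra. apply Rdiv_lt_0_compat; lra. }
  intros p Hp.
  rewrite Rq_diff.
  eapply Rle_lt_trans. apply vnorm_triangle.
  rewrite !vnorm_lsc_real, vnorm1, !qnorm_sq.
  apply (real_bound _ _ _ _ _ _ _ _ _ _ (qnorm (qsub p q))); auto.
  apply vnorm_ge0. unfold qnorm; apply sqrt_pos.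
  unfold qnorm. rewrite sqrt_sqrt. unfold Re, qsub, qadd, qopp; simpl. ring.
  unfold qsub, qadd, qopp; simpl; sq4.
Qed.

End Alg.

Lemma hom_zero {V W : QBanachAlg} (A : V -> W) : is_homomorphism A -> A vzero = vzero.
Proof. intros [Hadd _]. apply videm0. rewrite <- Hadd, vadd0. reflexivity. Qed.
Lemma hom_opp {V W : QBanachAlg} (A : V -> W) x : is_homomorphism A -> A (vopp x) = vopp (A x).
Proof.
  intro H. apply vopp_unique. pose proof (hom_zero A H) as H0. destruct H as [Hadd _].
  rewrite <- Hadd, vaddN. exact H0.
Qed.
Lemma hom_Rq {V W : QBanachAlg} (A : V -> W) q a : is_homomorphism A -> A (Rq q a) = Rq q (A a).
Proof.
  intro H. pose proof (fun x => hom_opp A x H) as Hop. destruct H as [Hadd [Hmul [Hl [Hr H1]]]].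
  unfold Rq. rewrite !Hadd, Hmul, Hop, !Hl, H1. reflexivity.
Qed.

Lemma sub_sub_l {V : QBanachAlg} (X Y : V) : vadd X (vopp (vadd X (vopp Y))) = Y.
Proof. rewrite vopp_add, vopp_opp, vaddA, vaddN, vadd0l. reflexivity. Qed.
Lemma add_sub {V : QBanachAlg} (X Y : V) : vadd X (vadd Y (vopp X)) = Y.
Proof. rewrite (vaddC Y), vaddA, vaddN, vadd0l. reflexivity. Qed.
Lemma sub_tri {V : QBanachAlg} (X Y T : V) :
  vadd Y (vopp X) = vadd (vadd Y (vopp T)) (vopp (vadd X (vopp T))).
Proof.
  rewrite vopp_add, vopp_opp, <- vaddA. f_equal.
  rewrite vaddA, (vaddC (vopp T) (vopp X)), <- vaddA, vaddNl, vadd0. reflexivity.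
Qed.

Theorem mainTheorem4 (V W : QBanachAlg) (A : V -> W) (a : V)
  (hV : (vone : V) <> vzero) (hW : (vone : W) <> vzero)
  (hA : is_homomorphism A) (hAb : bounded_below A) :
  forall q : quat, boundaryH (S_spectrum a) q -> boundaryH (S_spectrum_Phi A a) q.
Proof.
  intros q [Hcl Hnint].
  assert (Hone : A vone = vone) by (destruct hA as [_ [_ [_ [_ H]]]]; exact H).
  assert (Hmul : forall x y, A (vmul x y) = vmul (A x) (A y)) by (destruct hA as [_ [H _]]; exact H).
  split.
  2:{ intros [e [He H]]. apply Hnint. exists e. split; auto.
      intros p Hp [y [H1 H2]]. apply (H p Hp). exists (A y).
      rewrite <- !Hmul, H1, H2, Hone. auto. }
  intros e He. exists q. split.
  2:{ unfold qnorm, qsub, qadd, qopp; simpl. rewrite !Rplus_opp_r.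
      replace (0 * 0 + 0 * 0 + 0 * 0 + 0 * 0) with 0 by ring. rewrite sqrt_0. exact He. }
  clear e He.
  intros [w [Hw1 Hw2]].
  rewrite hom_Rq in Hw1, Hw2 by exact hA.
  destruct hAb as [c [Hc HAc]].
  set (TW := Rq q (A a)) in *.
  set (Wn := vnorm w).
  assert (HWn : 0 <= Wn) by apply vnorm_ge0.
  destruct (Rq_cont (A a) q (/ (2 * Wn + 1))) as [d1 [Hd1 Hd1c]].
  { apply Rinv_0_lt_compat. lra. }
  set (M := 2 * Wn / c).
  assert (HM0 : 0 <= M) by (unfold M; apply Rmult_le_pos; [lra | left; apply Rinv_0_lt_compat; lra]).
  assert (Hbound : forall p y, qnorm (qsub p q) < d1 -> vmul (Rq p a) y = vone -> vnorm y <= M).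
  { intros p y Hp Hy.
    set (X := Rq p (A a)).
    set (D := vadd X (vopp TW)).
    assert (HD : vnorm D < / (2 * Wn + 1)) by (apply Hd1c; exact Hp).
    assert (HXy : vmul X (A y) = vone) by (unfold X; rewrite <- hom_Rq, <- Hmul, Hy; auto).
    assert (HT : TW = vadd X (vopp D)) by (unfold D; rewrite sub_sub_l; reflexivity).
    assert (HAy : A y = vadd w (vopp (vmul w (vmul D (A y))))).
    { rewrite <- (vmul1l (A y)) at 1. rewrite <- Hw2, <- vmulA, HT at 1.
      rewrite vmulDl, HXy, vmulNl, vmulDr, vmul1r, vmulNr. reflexivity. }
    assert (Hn : vnorm (A y) <= Wn + Wn * vnorm D * vnorm (A y)).
    { rewrite HAy at 1. eapply Rle_trans. apply vnorm_triangle. rewrite vnorm_opp.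
      apply Rplus_le_compat_l. eapply Rle_trans. apply vnorm_mul.
      rewrite Rmult_assoc. apply Rmult_le_compat_l. auto. apply vnorm_mul. }
    assert (HDn : Wn * vnorm D <= / 2).
    { apply Rle_trans with (Wn * / (2 * Wn + 1)).
      apply Rmult_le_compat_l; auto; left; auto.
      apply (Rmult_le_reg_r (2 * Wn + 1)). lra.
      rewrite Rmult_assoc, Rinv_l by lra. field_simplify; lra. }
    assert (H0D := vnorm_ge0 D). assert (H0A := vnorm_ge0 (A y)).
    assert (HAy2 : vnorm (A y) <= 2 * Wn) by nra.
    assert (HAc' := HAc y). unfold M.
    apply (Rmult_le_reg_l c). auto. unfold Rdiv.
    replace (c * (2 * Wn * / c)) with (2 * Wn) by (field; lra). lra. }
  destruct (Rq_cont a q (/ (2 * (M + 1)))) as [d2 [Hd2 Hd2c]].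
  { apply Rinv_0_lt_compat. lra. }
  set (d := Rmin d1 d2).
  assert (Hd : 0 < d) by (apply Rmin_pos; auto).
  assert (Hdd1 : d <= d1) by apply Rmin_l. assert (Hdd2 : d <= d2) by apply Rmin_r.
  destruct (classic (exists p, qnorm (qsub p q) < d /\ invertible (Rq p a))) as [[p [Hp [y [Hy1 Hy2]]]] | Hno].
  2:{ apply Hnint. exists d. split; auto. intros p Hp Hinv. apply Hno. exists p. split; auto. }
  destruct (Hcl d Hd) as [p' [Hsp' Hp']].
  apply Hsp'.
  assert (Hyn : vnorm y <= M) by (apply (Hbound p); auto; lra).
  set (X := Rq p a) in *. set (Y := Rq p' a) in *. set (T := Rq q a) in *.
  set (E := vadd Y (vopp X)).
  assert (HE : vnorm E < / (M + 1)).
  { unfold E. rewrite (sub_tri X Y T). eapply Rle_lt_trans. apply vnorm_triangle.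
    rewrite vnorm_opp.
    assert (vnorm (vadd Y (vopp T)) < / (2 * (M + 1))) by (apply Hd2c; lra).
    assert (vnorm (vadd X (vopp T)) < / (2 * (M + 1))) by (apply Hd2c; lra).
    replace (/ (M + 1)) with (/ (2 * (M + 1)) + / (2 * (M + 1))) by (field; lra).
    lra. }
  set (u := vmul y E).
  assert (Hu : vnorm u < 1).
  { eapply Rle_lt_trans. apply vnorm_mul.
    assert (H0E := vnorm_ge0 E). assert (H0y := vnorm_ge0 y).
    apply Rle_lt_trans with (M * vnorm E). apply Rmult_le_compat_r; auto.
    apply Rle_lt_trans with (M * / (M + 1)).
    - apply Rmult_le_compat_l; auto; lra.
    - apply (Rmult_lt_reg_r (M + 1)). lra. rewrite Rmult_assoc, Rinv_l by lra. lra. }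
  destruct (neumann u Hu) as [z [Hz1 Hz2]].
  assert (HY : Y = vmul X (vadd vone u)).
  { unfold u. rewrite vmulDr, vmul1r, vmulA, Hy1, vmul1l. unfold E. rewrite add_sub. reflexivity. }
  rewrite HY. exists (vmul z y). split.
  - rewrite <- vmulA, (vmulA _ z y), Hz1, vmul1l. exact Hy1.
  - rewrite <- vmulA, (vmulA y X), Hy2, vmul1l. exact Hz2.
Qed.
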